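(* Let $a,b\ge 1$ be coprime integers with $a\le b$. Then there is a homogeneous polynomial $P_{a/b}(u,v,w)$ of degree $a+b-1$ with non-negative integer coefficients, not divisible by $u$, by $v$ or by $w$, such that $$M_{a/b}(x,y,z)=\frac{P_{a/b}(x^2,y^2,z^2)}{x^{a-1}\,y^{b-1}\,z^{a+b-1}}.$$
   Context: Markov polynomials. Let $x,y,z$ be indeterminates. Consider the set consisting of all rationals $\rho\in[0,1]$, each written in lowest terms $\rho=a/b$ with integers $a\ge 0$, $b\ge 1$, together with the formal symbol $1/0$ (i.e. $(a,b)=(1,0)$). To each such $\rho$ attach a Laurent polynomial $M_\rho(x,y,z)\in\mathbb{Z}[x^{\pm1},y^{\pm1},z^{\pm1}]$, the Markov polynomial, defined recursively by $M_{1/0}=y$, $M_{0/1}=x$, $M_{1/1}=\frac{x^2+y^2}{z}$, and: whenever $a/b$ and $c/d$ are elements of this set (non-negative integer pairs in lowest terms) with $|ad-bc|=1$ and $(a+2c)/(b+2d)\in[0,1]$, then $$M_{\frac{a+2c}{b+2d}}=\frac{M_{c/d}^2+M_{\frac{a+c}{b+d}}^2}{M_{a/b}}.$$ This determines $M_\rho$ uniquely for every rational $\rho\in[0,1]$. (For example $M_{1/2}=\frac{(x^2+y^2)^2+x^2z^2}{yz^2}$.) The triples $(M_{a/b},M_{c/d},M_{(a+c)/(b+d)})$ with $|ad-bc|=1$ solve $X^2+Y^2+Z^2=\frac{x^2+y^2+z^2}{xyz}XYZ$. *)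

(* Defs.v *)
From HB Require Import structures.
From mathcomp Require Import all_boot all_order all_algebra.
From mathcomp Require Import fraction.
From mathcomp Require Export mpoly.
Set Implicit Arguments. Unset Strict Implicit. Unset Printing Implicit Defensive.
Import Order.TTheory GRing.Theory Num.Theory.
Local Open Scope ring_scope.

(* Integer polynomials in three variables u,v,w (= 'X_0,'X_1,'X_2), and
   the field Q(x,y,z) of rational functions, realised as the fraction field
   of Z[x,y,z]; Laurent polynomials live inside it. *)
Notation poly3 := {mpoly int[3]}.
Notation ratfun3 := {fraction poly3}.

Definition vx : ratfun3 := tofrac ('X_0 : poly3).
Definition vy : ratfun3 := tofrac ('X_1 : poly3).
Definition vz : ratfun3 := tofrac ('X_2 : poly3).

(* The index set: pairs (a,b) of naturals in lowest terms with a/b in [0,1],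
   together with the formal symbol 1/0, i.e. the pair (1,0). *)
Definition markov_index (a b : nat) : bool :=
  coprime a b && ((a <= b)%N || ((a == 1%N) && (b == 0%N))).

Definition farey_adj (a b c d : nat) : bool :=
  (a * d == b * c + 1)%N || (b * c == a * d + 1)%N.

(* M : nat -> nat -> ratfun3, M a b standing for M_{a/b}, is a family of
   Markov polynomials: it satisfies the defining initial values and the
   defining recursion of the paper.  (These conditions determine M_{a/b}
   uniquely for every index a/b.) *)
Definition is_markov_family (M : nat -> nat -> ratfun3) : Prop :=
  [/\ M 1%N 0%N = vy,
      M 0%N 1%N = vx,
      M 1%N 1%N = (vx ^+ 2 + vy ^+ 2) / vz &
      forall a b c d : nat,
        markov_index a b -> markov_index c d -> farey_adj a b c d ->
        (a + 2 * c <= b + 2 * d)%N ->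
        M (a + 2 * c)%N (b + 2 * d)%N
          = (M c d ^+ 2 + M (a + c)%N (b + d)%N ^+ 2) / M a b].

(* Main.v *)
Require Import Defs.
From HB Require Import structures.
From mathcomp Require Import all_boot all_order all_algebra.
From mathcomp Require Import fraction.
From mathcomp Require Import mpoly.
Import Order.TTheory GRing.Theory Num.Theory.
Local Open Scope ring_scope.
From mathcomp Require Import ring zify.

Section NatPart.
Local Open Scope nat_scope.
Definition ok (a b : nat) := a <= b \/ (a = 1 /\ b = 0).

Lemma A1 e f g h : g * f = e * h + 1 -> ~ (e = 0 /\ f = 1 /\ g = 1 /\ h = 0) ->
  (e <= g /\ f <= h) \/ (g <= e /\ h <= f).
Proof.
move=> d nr.
case: (leqP e g) => eg; case: (leqP f h) => fh; try by [left|right]; try lia.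
- have e1 : e <= 1 by nia.
  case: e e1 d eg {nr} (nr) => [|[|//]] _ d eg nr.
    exfalso; apply: nr; move: d; rewrite mul0n add0n => /eqP; rewrite muln_eq1.
    case/andP => /eqP hg /eqP hf; lia.
  right; nia.
- exfalso; nia.
Qed.

Lemma A2 e f p q : (e + p) * f = e * (f + q) + 1 -> ok e f -> ok (e + p) (f + q) ->
  e + (e + p) <= f + (f + q) -> ok p q /\ e + p <= f + q.
Proof.
move=> d [h1|[-> ->]] [h2|[h3 h4]]; rewrite /ok; try nia.
Qed.

Lemma A3 p q g h : g * (q + h) = (p + g) * h + 1 -> ok (p + g) (q + h) -> ok g h ->
  p + g + g <= q + h + h -> ok p q /\ p + g <= q + h.
Proof.
move=> d [h1|[h3 h4]] [h2|[h5 h6]]; rewrite /ok; try nia.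
Qed.

Lemma A4 e f g h : g * f = e * h + 1 -> e + g <= f + h -> ok e f /\ ok g h.
Proof.
move=> d le.
have ef : e <= f.
  case: (leqP e f) => // lt; exfalso.
  have gh : g <= h by lia.
  have m1 : g * f <= h * f by apply: leq_mul.
  have m2 : f * h <= e * h by apply: leq_mul; lia.
  lia.
split; first by left.
case: (leqP g h) => gh; first by left.
case: h d le gh => [|h] d le gh.
  move: d; rewrite muln0 add0n => /eqP; rewrite muln_eq1 => /andP[/eqP -> _].
  by right.
have m1 : h.+2 * f <= g * f by apply: leq_mul.
have m2 : e * h.+1 <= f * h.+1 by apply: leq_mul.
have f1 : f <= 1 by nia.
case: f f1 ef d le m1 m2 => [|[|//]] _ ef d le m1 m2; first lia.
case: e ef d le m1 m2 => [|[|//]] _ d le m1 m2; lia.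
Qed.

Lemma decomp n p q : p + q <= n -> 0 < p -> 0 < q -> coprime p q ->
  exists e f g h, [/\ p = e + g, q = f + h & g * f = e * h + 1].
Proof.
elim: n p q => [|n IH] p q hn hp hq cpq; first lia.
case: (ltngtP p q) => c.
- have cp : coprime p (q - p) by rewrite /coprime -gcdnDl (subnKC (ltnW c)).
  have [e [f [g [h [E1 E2 E3]]]]] := IH p (q - p) ltac:(lia) hp ltac:(lia) cp.
  exists e, (e + f), g, (g + h); split; [lia|lia|nia].
- have cp : coprime (p - q) q.
    by rewrite coprime_sym /coprime -gcdnDl (subnKC (ltnW c)) gcdnC.
  have [e [f [g [h [E1 E2 E3]]]]] := IH (p - q) q ltac:(lia) ltac:(lia) hq cp.
  exists (e + f), f, (g + h), h; split; [lia|lia|nia].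
- subst q; move: cpq; rewrite /coprime gcdnn => /eqP ->.
  by exists 0, 1, 1, 0.
Qed.

End NatPart.

Set Implicit Arguments. Unset Strict Implicit. Unset Printing Implicit Defensive.

Definition sq : 3.-tuple poly3 := [tuple ('X_0 : poly3) ^+ 2; 'X_1 ^+ 2; 'X_2 ^+ 2].
Definition phi (P : poly3) : ratfun3 := tofrac (P \mPo sq).

Lemma phiD p q : phi (p + q) = phi p + phi q.
Proof. by rewrite /phi comp_mpolyD tofracD. Qed.
Lemma phiM p q : phi (p * q) = phi p * phi q.
Proof. by rewrite /phi rmorphM /= tofracM. Qed.
Lemma phiX p k : phi (p ^+ k) = phi p ^+ k.
Proof. by rewrite /phi !rmorphXn. Qed.
Lemma phiX0 : phi 'X_0 = vx ^+ 2.
Proof. by rewrite /phi comp_mpolyXU /= rmorphXn. Qed.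
Lemma phiX1 : phi 'X_1 = vy ^+ 2.
Proof. by rewrite /phi comp_mpolyXU /= rmorphXn. Qed.
Lemma phiX2 : phi 'X_2 = vz ^+ 2.
Proof. by rewrite /phi comp_mpolyXU /= rmorphXn. Qed.

Lemma Xi_neq0 (i : 'I_3) : ('X_i : poly3) != 0.
Proof.
apply/eqP => h; have := congr1 (meval (fun _ => (1:int))) h.
by rewrite mevalXU meval0.
Qed.
Lemma vx_neq0 : vx != 0. Proof. by rewrite /vx tofrac_eq0 Xi_neq0. Qed.
Lemma vy_neq0 : vy != 0. Proof. by rewrite /vy tofrac_eq0 Xi_neq0. Qed.
Lemma vz_neq0 : vz != 0. Proof. by rewrite /vz tofrac_eq0 Xi_neq0. Qed.

Definition s3 (e f : nat) : poly3 := 'X_0 ^+ e * 'X_1 ^+ f * ('X_2 ^+ e * 'X_2 ^+ f).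
Definition Phi (e f : nat) (P : poly3) : ratfun3 :=
  phi P * (vx * vy * vz) / (vx ^+ e * vy ^+ f * (vz ^+ e * vz ^+ f)).

Lemma phi_s3 e f : phi (s3 e f) = (vx ^+ e * vy ^+ f * (vz ^+ e * vz ^+ f)) ^+ 2.
Proof.
rewrite /s3 !phiM !phiX phiX0 phiX1 phiX2 -!exprM !(mulnC 2%N) !exprM.
by rewrite !exprMn.
Qed.

Lemma alg_rec (F : fieldType) (pn pa pc pm x y z xa xc yb yd za zc zb zd : F) :
  x != 0 -> y != 0 -> z != 0 -> xa != 0 -> xc != 0 -> yb != 0 -> yd != 0 ->
  za != 0 -> zc != 0 -> zb != 0 -> zd != 0 -> pa != 0 ->
  pn * pa = (xa * yb * (za * zb)) ^+ 2 * pc ^+ 2 + pm ^+ 2 ->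
  pn * (x * y * z) / (xa * xc ^+ 2 * (yb * yd ^+ 2) * (za * zc ^+ 2 * (zb * zd ^+ 2)))
  = ((pc * (x * y * z) / (xc * yd * (zc * zd))) ^+ 2 +
     (pm * (x * y * z) / (xa * xc * (yb * yd) * (za * zc * (zb * zd)))) ^+ 2) /
    (pa * (x * y * z) / (xa * yb * (za * zb))).
Proof.
move=> h1 h2 h3 h4 h5 h6 h7 h8 h9 h10 h11 h12 H.
have nPa : pa * (x * y * z) / (xa * yb * (za * zb)) != 0.
  by rewrite !mulf_neq0 ?invr_eq0 ?mulf_neq0.
apply: (canRL (mulfK nPa)).
transitivity (pn * pa * (x * y * z) ^+ 2 / (xa * yb * (za * zb) * (xa * xc ^+ 2 * (yb * yd ^+ 2) * (za * zc ^+ 2 * (zb * zd ^+ 2))))).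
  by field; rewrite ?h1 ?h2 ?h3 ?h4 ?h5 ?h6 ?h7 ?h8 ?h9 ?h10 ?h11 ?h12.
rewrite H.
by field; rewrite ?h1 ?h2 ?h3 ?h4 ?h5 ?h6 ?h7 ?h8 ?h9 ?h10 ?h11 ?h12.
Qed.

Lemma exp2 (R : ringType) (x : R) a c : x ^+ (a + 2 * c) = x ^+ a * (x ^+ c) ^+ 2.
Proof. by rewrite exprD -exprM mulnC. Qed.

Lemma phi_rec (a b c d : nat) (Pa Pc Pm Pn : poly3) :
  Pn * Pa = s3 a b * Pc ^+ 2 + Pm ^+ 2 -> phi Pa != 0 ->
  Phi (a + 2 * c) (b + 2 * d) Pn
  = (Phi c d Pc ^+ 2 + Phi (a + c) (b + d) Pm ^+ 2) / Phi a b Pa.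
Proof.
move=> E nz.
have H := congr1 phi E; rewrite phiM phiD phiM !phiX phi_s3 in H.
rewrite /Phi !exp2 !exprD.
have nx := vx_neq0; have ny := vy_neq0; have nz' := vz_neq0.
exact: (@alg_rec _ (phi Pn) (phi Pa) (phi Pc) (phi Pm) vx vy vz (vx^+a) (vx^+c)
  (vy^+b) (vy^+d) (vz^+a) (vz^+c) (vz^+b) (vz^+d) nx ny nz' (expf_neq0 _ nx)
  (expf_neq0 _ nx) (expf_neq0 _ ny) (expf_neq0 _ ny) (expf_neq0 _ nz')
  (expf_neq0 _ nz') (expf_neq0 _ nz') (expf_neq0 _ nz') nz H).
Qed.

Definition nnp (P : poly3) := forall m, 0 <= P@_m.

Lemma nnpD p q : nnp p -> nnp q -> nnp (p + q).
Proof. by move=> hp hq m; rewrite mcoeffD addr_ge0. Qed.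
Lemma nnpM p q : nnp p -> nnp q -> nnp (p * q).
Proof.
move=> hp hq m; rewrite mcoeffM; apply: sumr_ge0 => k _; exact: mulr_ge0.
Qed.
Lemma nnpX (i : 'I_3) : nnp 'X_i.
Proof. by move=> m; rewrite mcoeffX ler0n. Qed.
Lemma nnp1 : nnp 1.
Proof. by move=> m; rewrite mcoeff1 ler0n. Qed.

Lemma homX (i : 'I_3) : ('X_i : poly3) \is 1.-homog.
Proof. by rewrite dhomogX /= mdeg1. Qed.

Record mat := Mat { m11 : poly3; m12 : poly3; m21 : poly3; m22 : poly3 }.
Definition mmul (A B : mat) :=
  Mat (m11 A * m11 B + m12 A * m21 B) (m11 A * m12 B + m12 A * m22 B)
      (m21 A * m11 B + m22 A * m21 B) (m21 A * m12 B + m22 A * m22 B).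
Definition tpoly : poly3 := 'X_0 + 'X_1 + 'X_2.
Definition detm (A : mat) := m11 A * m22 A - m12 A * m21 A.
Definition trok (A : mat) := m11 A + m22 A = tpoly * m21 A.
Definition nnm (A : mat) := [/\ nnp (m11 A), nnp (m12 A), nnp (m21 A) & nnp (m22 A)].
Definition homm (n : nat) (A : mat) :=
  [/\ m11 A \is n.-homog, m12 A \is n.+1.-homog, m21 A \is (n.-1).-homog
    & m22 A \is n.-homog].
Definition ev1 (i : 'I_3) : int := if val i == 0%N then 1 else 0.
Definition ev2 (i : 'I_3) : int := if val i == 1%N then 1 else 0.
Definition evok (A : mat) :=
  [/\ (m11 A).@[ev1] = 1, (m12 A).@[ev1] = 0, (m21 A).@[ev1] = 1 & (m22 A).@[ev1] = 0] /\
  [/\ (m11 A).@[ev2] = 0, (m12 A).@[ev2] = 0, (m21 A).@[ev2] = 1 & (m22 A).@[ev2] = 1].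
Definition good (n : nat) (A : mat) := [/\ nnm A, homm n A, trok A & evok A].

Lemma nnm_mul A B : nnm A -> nnm B -> nnm (mmul A B).
Proof.
by case=> ? ? ? ? [] ? ? ? ?; split; apply: nnpD; apply: nnpM.
Qed.

Lemma dhomogM' d e k (p q : poly3) : p \is d.-homog -> q \is e.-homog ->
  (d + e)%N = k -> p * q \is k.-homog.
Proof. by move=> hp hq <-; exact: dhomogM. Qed.

Lemma homm_mul n1 n2 A B : (0 < n1)%N -> (0 < n2)%N -> homm n1 A -> homm n2 B ->
  homm (n1 + n2) (mmul A B).
Proof.
case: n1 => // k1 _; case: n2 => // k2 _.
case=> a1 a2 a3 a4 [] b1 b2 b3 b4; split => /=; apply: dhomogD;
  (apply: dhomogM'; [eassumption | eassumption | rewrite /=; lia]).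
Qed.

Lemma evok_mul A B : evok A -> evok B -> evok (mmul A B).
Proof.
case=> [[a1 a2 a3 a4] [a5 a6 a7 a8]] [[b1 b2 b3 b4] [b5 b6 b7 b8]].
by split; split; rewrite /= !mevalD !mevalM ?a1 ?a2 ?a3 ?a4 ?a5 ?a6 ?a7 ?a8
  ?b1 ?b2 ?b3 ?b4 ?b5 ?b6 ?b7 ?b8.
Qed.

Definition mk (A B : mat) :=
  m21 (mmul A B) ^+ 2 + detm B * m21 A ^+ 2 + detm A * m21 B ^+ 2
  = tpoly * m21 A * m21 B * m21 (mmul A B).

Lemma cert1 (R : comRingType) (c x y l r : R) : x = y -> l - r = c * (x - y) -> l = r.
Proof. by move=> -> h; apply/eqP; rewrite -subr_eq0 h subrr mulr0. Qed.

Lemma detm_mul A B : detm (mmul A B) = detm A * detm B.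
Proof. case: A B => [a1 a2 a3 a4] [b1 b2 b3 b4]; rewrite /detm /=; ring. Qed.

Lemma tr_left A B : trok A -> trok B -> trok (mmul A B) -> trok (mmul A (mmul A B)).
Proof.
case: A B => [a1 a2 a3 a4] [b1 b2 b3 b4]; rewrite /trok /= => hA hB hAB.
have E4' : a4 = tpoly * a3 - a1 by rewrite -hA; ring.
rewrite E4' in hAB *.
have E4 : b4 = tpoly * b3 - b1 by rewrite -hB; ring.
rewrite E4 in hAB *.
move: hAB => hAB.
apply: (@cert1 _ (tpoly * a3) _ _ _ _ hAB); ring.
Qed.

Lemma tr_right A B : trok A -> trok B -> trok (mmul A B) -> trok (mmul (mmul A B) B).
Proof.
case: A B => [a1 a2 a3 a4] [b1 b2 b3 b4]; rewrite /trok /= => hA hB hAB.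
have E4 : a4 = tpoly * a3 - a1 by rewrite -hA; ring.
have E4' : b4 = tpoly * b3 - b1 by rewrite -hB; ring.
rewrite E4' in hAB *.
rewrite E4 in hAB *.
move: hAB => hAB.
apply: (@cert1 _ (tpoly * b3) _ _ _ _ hAB); ring.
Qed.

Lemma rec_left A B : trok A -> mk A B ->
  m21 (mmul A (mmul A B)) * m21 B = detm B * m21 A ^+ 2 + m21 (mmul A B) ^+ 2.
Proof.
case: A B => [a1 a2 a3 a4] [b1 b2 b3 b4]; rewrite /trok /mk /detm /= => hA h.
have E4 : a4 = tpoly * a3 - a1 by rewrite -hA; ring.
rewrite E4 in h *; move: h => h.
apply: (@cert1 _ (-1) _ _ _ _ h); ring.
Qed.

Lemma rec_right A B : trok B -> mk A B ->
  m21 (mmul (mmul A B) B) * m21 A = detm A * m21 B ^+ 2 + m21 (mmul A B) ^+ 2.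
Proof.
case: A B => [a1 a2 a3 a4] [b1 b2 b3 b4]; rewrite /trok /mk /detm /= => hB h.
have E4 : b4 = tpoly * b3 - b1 by rewrite -hB; ring.
rewrite E4 in h *; move: h => h.
apply: (@cert1 _ (-1) _ _ _ _ h); ring.
Qed.

Lemma mk_left A B : trok A -> mk A B -> mk A (mmul A B).
Proof.
case: A B => [a1 a2 a3 a4] [b1 b2 b3 b4]; rewrite /trok /mk /detm /= => hA h.
have E4 : a4 = tpoly * a3 - a1 by rewrite -hA; ring.
rewrite E4 in h *; move: h => h.
apply: (@cert1 _ (a1 * (tpoly * a3 - a1) - a2 * a3) _ _ _ _ h); ring.
Qed.

Lemma mk_right A B : trok B -> mk A B -> mk (mmul A B) B.
Proof.
case: A B => [a1 a2 a3 a4] [b1 b2 b3 b4]; rewrite /trok /mk /detm /= => hB h.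
have E4 : b4 = tpoly * b3 - b1 by rewrite -hB; ring.
rewrite E4 in h *; move: h => h.
apply: (@cert1 _ (b1 * (tpoly * b3 - b1) - b2 * b3) _ _ _ _ h); ring.
Qed.

Lemma phi_nz (P : poly3) : P.@[ev1] = 1 -> phi P != 0.
Proof.
move=> h; rewrite /phi tofrac_eq0; apply/eqP => h0.
have := congr1 (meval ev1) h0; rewrite comp_mpoly_meval meval0.
rewrite (@meval_eq _ _ _ ev1) ?h //.
by case=> [[|[|[|i]]] Hi] //=; rewrite (tnth_nth 0) /= rmorphXn /= mevalXU /ev1.
Qed.

Lemma s3D e f g h : s3 (e + g) (f + h) = s3 e f * s3 g h.
Proof. rewrite /s3 !exprD; ring. Qed.

Definition Inv (M : nat -> nat -> ratfun3) (e f g h : nat) :=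
  exists A B : mat,
  [/\ good (e + f) A, good (g + h) B, detm A = s3 e f, detm B = s3 g h
    & trok (mmul A B)] /\
  [/\ mk A B, M e f = Phi e f (m21 A), M g h = Phi g h (m21 B)
    & M (e + g)%N (f + h)%N = Phi (e + g) (f + h) (m21 (mmul A B))].


Lemma prop_left M e f g h : is_markov_family M -> Inv M e f g h ->
  (g * f = e * h + 1)%N -> markov_index e f -> markov_index g h ->
  (e + (e + g) <= f + (f + h))%N -> Inv M e f (e + g) (f + h).
Proof.
case=> _ _ _ hrec [A [B [[gA gB dA dB tAB] [hmk ME MG MM]]]] det iL iR hle.
have p1 : (0 < e + f)%N by nia.
have p2 : (0 < g + h)%N by nia.
case: gA => nA hA tA eA; case: gB => nB hB tB eB.
exists A, (mmul A B); split; split => //.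
- split; [exact: nnm_mul | | exact: tAB | exact: evok_mul].
  by rewrite addnACA; apply: homm_mul.
- by rewrite detm_mul dA dB s3D.
- exact: tr_left.
- exact: mk_left.
- have -> : (e + (e + g) = g + 2 * e)%N by lia.
  have -> : (f + (f + h) = h + 2 * f)%N by lia.
  have fa : farey_adj g h e f by rewrite /farey_adj det mulnC eqxx.
  rewrite hrec //; last by lia.
  rewrite ME (addnC g e) (addnC h f) MM MG.
  case: eB => [[_ _ b1 _] _].
  symmetry; rewrite (addnC e g) (addnC f h); apply: (phi_rec e f _ (phi_nz b1)).
  by rewrite rec_left // dB.
Qed.

Lemma prop_right M e f g h : is_markov_family M -> Inv M e f g h ->
  (g * f = e * h + 1)%N -> markov_index e f -> markov_index g h ->
  (e + g + g <= f + h + h)%N -> Inv M (e + g) (f + h) g h.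
Proof.
case=> _ _ _ hrec [A [B [[gA gB dA dB tAB] [hmk ME MG MM]]]] det iL iR hle.
have p1 : (0 < e + f)%N by nia.
have p2 : (0 < g + h)%N by nia.
case: gA => nA hA tA eA; case: gB => nB hB tB eB.
exists (mmul A B), B; split; split => //.
- split; [exact: nnm_mul | | exact: tAB | exact: evok_mul].
  by rewrite addnACA; apply: homm_mul.
- by rewrite detm_mul dA dB s3D.
- exact: tr_right.
- exact: mk_right.
- have -> : (e + g + g = e + 2 * g)%N by lia.
  have -> : (f + h + h = f + 2 * h)%N by lia.
  have fa : farey_adj e f g h by rewrite /farey_adj (mulnC f g) det eqxx orbT.
  rewrite hrec //; last by lia.
  rewrite MM MG ME.
  case: eA => [[_ _ a1 _] _].
  symmetry; apply: (phi_rec g h _ (phi_nz a1)).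
  by rewrite rec_right // dA.
Qed.

Definition QA : mat := Mat ('X_0 + 'X_2) ('X_0 * 'X_1) 1 'X_1.
Definition QB : mat := Mat 'X_0 ('X_0 * 'X_1) 1 ('X_1 + 'X_2).

Lemma phi1 : phi 1 = 1.
Proof. by rewrite /phi comp_mpoly1 tofrac1. Qed.

Lemma ev1X (i : 'I_3) : ('X_i : poly3).@[ev1] = ev1 i. Proof. exact: mevalXU. Qed.
Lemma ev2X (i : 'I_3) : ('X_i : poly3).@[ev2] = ev2 i. Proof. exact: mevalXU. Qed.

Lemma base_alg (F : fieldType) (x y z : F) : x != 0 -> y != 0 -> z != 0 ->
  [/\ x = 1 * (x * y * z) / (x ^+ 0 * y ^+ 1 * (z ^+ 0 * z ^+ 1)),
      y = 1 * (x * y * z) / (x ^+ 1 * y ^+ 0 * (z ^+ 1 * z ^+ 0)) &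
      (x ^+ 2 + y ^+ 2) / z = (1 * x ^+ 2 + y ^+ 2 * 1) * (x * y * z) / (x ^+ 1 * y ^+ 1 * (z ^+ 1 * z ^+ 1))].
Proof.
move=> hx hy hz; split; field; rewrite ?hx ?hy ?hz //.
Qed.

Lemma base M : is_markov_family M -> Inv M 0 1 1 0.
Proof.
case=> M10 M01 M11 _.
have [b1 b2 b3] := base_alg vx_neq0 vy_neq0 vz_neq0.
exists QA, QB; split; split.
- split.
  + split; [apply: nnpD; apply: nnpX | apply: nnpM; apply: nnpX | exact: nnp1 | exact: nnpX].
  + split => /=; [exact: dhomogD (homX _) (homX _) | exact: dhomogM (homX _) (homX _)
      | exact: dhomog1 | exact: homX].
  + by rewrite /trok /tpoly /=; ring.
  + by split; split; rewrite /= ?mevalD ?mevalM ?ev1X ?ev2X ?meval1.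
- split.
  + split; [exact: nnpX | apply: nnpM; apply: nnpX | exact: nnp1 | apply: nnpD; apply: nnpX].
  + split => /=; [exact: homX | exact: dhomogM (homX _) (homX _)
      | exact: dhomog1 | exact: dhomogD (homX _) (homX _)].
  + by rewrite /trok /tpoly /=; ring.
  + by split; split; rewrite /= ?mevalD ?mevalM ?ev1X ?ev2X ?meval1.
- by rewrite /detm /s3 /=; ring.
- by rewrite /detm /s3 /=; ring.
- by rewrite /trok /tpoly /=; ring.
- by rewrite /mk /detm /tpoly /=; ring.
- by rewrite M01 /Phi /= phi1.
- by rewrite M10 /Phi /= phi1.
- by rewrite M11 /Phi /= !phiD !phiM phi1 phiX0 phiX1.
Qed.

Lemma farey_coprime e f g h : (g * f = e * h + 1)%N -> coprime e f /\ coprime g h.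
Proof.
move=> d; split; rewrite /coprime -dvdn1.
- have d1 : (gcdn e f %| g * f)%N by apply: dvdn_mull; apply: dvdn_gcdr.
  have d2 : (gcdn e f %| e * h)%N by apply: dvdn_mulr; apply: dvdn_gcdl.
  by rewrite d (dvdn_addr 1 d2) in d1.
- have d1 : (gcdn g h %| g * f)%N by apply: dvdn_mulr; apply: dvdn_gcdl.
  have d2 : (gcdn g h %| e * h)%N by apply: dvdn_mull; apply: dvdn_gcdr.
  by rewrite d (dvdn_addr 1 d2) in d1.
Qed.

Lemma mi_of a b : coprime a b -> ok a b -> markov_index a b.
Proof. by rewrite /markov_index => -> [->|[-> ->]]. Qed.

Lemma main M : is_markov_family M -> forall n e f g h, (e + f + g + h <= n)%N ->
  (g * f = e * h + 1)%N -> ok e f -> ok g h -> (e + g <= f + h)%N -> Inv M e f g h.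
Proof.
move=> hM; elim=> [|n IH] e f g h hn d oL oR le.
  have g0 : g = 0%N by lia.
  by exfalso; move: d; rewrite g0 mul0n; lia.
case: (boolP [&& e == 0%N, f == 1%N, g == 1%N & h == 0%N]).
  by case/and4P => /eqP -> /eqP -> /eqP -> /eqP ->; exact: base.
move=> nr'.
have nr : ~ [/\ e = 0%N, f = 1%N, g = 1%N & h = 0%N].
  by case=> e0 f0 g0 h0; move: nr'; rewrite e0 f0 g0 h0.
have pos : (0 < e + f)%N by nia.
have [[eg fh]|[ge hf]] := A1 e f g h d ltac:(by move=> [? [? [? ?]]]; apply: nr).
- have [p Ep] : exists p, g = (e + p)%N by exists (g - e)%N; lia.
  have [q Eq] : exists q, h = (f + q)%N by exists (h - f)%N; lia.
  subst g h.
  have [op le'] := A2 e f p q d oL oR le.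
  have d' : (p * f = e * q + 1)%N by nia.
  have [c1 c2] := farey_coprime d'.
  apply: prop_left => //.
  + exact: (IH e f p q ltac:(lia) d' oL op le').
  + exact: mi_of.
  + exact: mi_of.
- have [p Ep] : exists p, e = (p + g)%N by exists (e - g)%N; lia.
  have [q Eq] : exists q, f = (q + h)%N by exists (f - h)%N; lia.
  subst e f.
  have [op le'] := A3 p q g h d oL oR le.
  have d' : (g * q = p * h + 1)%N by nia.
  have [c1 c2] := farey_coprime d'.
  apply: prop_right => //.
  + have pos2 : (0 < g + h)%N by nia.
    exact: (IH p q g h ltac:(lia) d' op oR le').
  + exact: mi_of.
  + exact: mi_of.
Qed.

Lemma fin_alg (F : fieldType) (p x y z : F) a b : x != 0 -> y != 0 -> z != 0 ->
  p * (x * y * z) / (x ^+ a.+1 * y ^+ b.+1 * (z ^+ a.+1 * z ^+ b.+1))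
  = p / (x ^+ (a.+1 - 1) * y ^+ (b.+1 - 1) * z ^+ (a.+1 + b.+1 - 1)).
Proof.
move=> hx hy hz.
have -> : (a.+1 + b.+1 - 1 = (a + b).+1)%N by lia.
rewrite !subSS !subn0.
rewrite !exprS exprD.
have ha : x ^+ a != 0 by rewrite expf_neq0.
have hb : y ^+ b != 0 by rewrite expf_neq0.
have hc : z ^+ a != 0 by rewrite expf_neq0.
have hd : z ^+ b != 0 by rewrite expf_neq0.
by field; rewrite ?hx ?hy ?hz ?ha ?hb ?hc ?hd.
Qed.

Unset Implicit Arguments.

Theorem theorem3p1 (M : nat -> nat -> ratfun3) (a b : nat) :
  is_markov_family M ->
  (1 <= a)%N -> (1 <= b)%N -> coprime a b -> (a <= b)%N ->
  exists P : poly3,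
    [/\ P \is (a + b - 1)%N.-homog,
        (forall m, 0 <= P@_m),
        ~ (exists Q : poly3, P = 'X_0 * Q),
        ~ (exists Q : poly3, P = 'X_1 * Q) /\
        ~ (exists Q : poly3, P = 'X_2 * Q) &
        M a b =
          tofrac (P \mPo [tuple ('X_0 : poly3) ^+ 2; 'X_1 ^+ 2; 'X_2 ^+ 2])
          / (vx ^+ (a - 1) * vy ^+ (b - 1) * vz ^+ (a + b - 1))].
Proof.
move=> hM ha hb cab hab.
have [e [f [g [h [Ea Eb d]]]]] := decomp (a + b) a b (leqnn _) ha hb cab.
have [oL oR] := A4 e f g h d ltac:(lia).
have [A [B [[gA gB dA dB tAB] [hmk ME MG MM]]]] :=
  main hM (leqnn _) d oL oR ltac:(lia).
have p1 : (0 < e + f)%N by nia.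
have p2 : (0 < g + h)%N by nia.
case: gA => nA hA tA eA; case: gB => nB hB tB eB.
have [_ _ n3 _] := nnm_mul nA nB.
have [_ _ h3 _] := homm_mul p1 p2 hA hB.
have [[_ _ v1 _] [_ _ v2 _]] := evok_mul eA eB.
exists (m21 (mmul A B)); split.
- by have -> : (a + b - 1 = (e + f + (g + h)).-1)%N by lia.
- exact: n3.
- case=> Q EQ; move: v2; rewrite EQ mevalM ev2X /ev2 /= mul0r.
  by move/eqP; rewrite eq_sym oner_eq0.
- split; case=> Q EQ; move: v1; rewrite EQ mevalM ev1X /ev1 /= mul0r;
  by move/eqP; rewrite eq_sym oner_eq0.
- have -> : M a b = Phi a b (m21 (mmul A B)) by rewrite Ea Eb MM.
  rewrite /Phi.
  case: a ha {Ea hab cab} => [|a'] // _; case: b hb {Eb} => [|b'] // _.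
  rewrite /phi /sq; apply: fin_alg; [exact: vx_neq0 | exact: vy_neq0 | exact: vz_neq0].
Qed.
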